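(* Let $X$ be a complex Banach space, $J:X\to X^*$ a duality section, and $x\in X$ a unit vector such that for every unit vector $y\neq x$ one has $\|x+y\|<2$. If $T=\{e^{tA}:t\ge 0\}$ is a $(C_0)$ contraction semigroup with generator $A$ and $\lim_{t\to\infty}|\langle T(t)x,J(x)\rangle|=1$, then $x$ is in the domain of $A$ and $Ax=i\lambda x$ for some real $\lambda$.
   Context: For a complex Banach space $X$, a functional $x^*\in X^*$ is called dual to $x\in X$ if $\langle x,x^*\rangle = \|x^*\|\|x\| = \|x^*\|^2=\|x\|^2$. A map $J:X\to X^*$ is a duality section if $J(x)$ is dual to $x$ for every $x\in X$. *)

(* Defs.v *)
From mathcomp Require Import all_boot all_order all_algebra.
From mathcomp Require Import all_classical all_reals all_analysis.
From mathcomp Require Export complex.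
Import Order.TTheory GRing.Theory Num.Theory numFieldNormedType.Exports.
Local Open Scope classical_set_scope.
Local Open Scope ring_scope.
Local Open Scope complex_scope.

Section Defs.
Context {R : realType} {X : normedModType R[i]}.

Definition rnorm (x : X) : R := complex.Re `|x|.

Definition is_dual_elt (f : X -> R[i]) : Prop :=
  (forall (a : R[i]) (u v : X), f (a *: u + v) = a * f u + f v) /\
  continuous (f : X -> R[i]^o).

Definition dual_norm (f : X -> R[i]) : R :=
  sup [set complex.Re `|f y| | y in [set y : X | rnorm y <= 1]].

Definition dual_to (x : X) (f : X -> R[i]) : Prop :=
  f x = (dual_norm f * rnorm x)%:C /\
  dual_norm f * rnorm x = dual_norm f ^+ 2 /\
  dual_norm f ^+ 2 = rnorm x ^+ 2.

Definition duality_section (J : X -> X -> R[i]) : Prop :=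
  forall x, is_dual_elt (J x) /\ dual_to x (J x).

(* (C_0) contraction semigroup {T(t) : t >= 0} of bounded C-linear operators;
   T is indexed by R, only t >= 0 matters. *)
Definition C0_contraction_semigroup (T : R -> X -> X) : Prop :=
  (forall t, 0 <= t -> forall (a : R[i]) (u v : X), T t (a *: u + v) = a *: T t u + T t v) /\
  (forall t, 0 <= t -> continuous (T t)) /\
  (forall u, T 0 u = u) /\
  (forall s t, 0 <= s -> 0 <= t -> forall u, T (s + t) u = T s (T t u)) /\
  (forall t, 0 <= t -> forall u, rnorm (T t u) <= rnorm u) /\
  (forall u, (fun t => T t u) @ 0^'+ --> u).

Definition diff_quot (T : R -> X -> X) (u : X) (h : R) : X :=
  (h^-1)%:C *: (T h u - u).

Definition is_generator (T : R -> X -> X) (D : set X) (A : X -> X) : Prop :=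
  D = [set u | cvg (diff_quot T u @ 0^'+)] /\
  (forall u, D u -> diff_quot T u @ 0^'+ --> A u).

End Defs.

(* Main.v *)
Require Import Defs.
From mathcomp Require Import all_boot all_order all_algebra.
From mathcomp Require Import all_classical all_reals all_analysis.
From mathcomp Require Import complex.
From mathcomp Require Import ring lra.
Import Order.TTheory GRing.Theory Num.Theory numFieldNormedType.Exports.
Local Open Scope classical_set_scope.
Local Open Scope ring_scope.
Local Open Scope complex_scope.


Section S.
Context {R : realType}.
Local Notation K := R[i].

Lemma realC_Re (z : K) : 0 <= z -> z = (complex.Re z)%:C.
Proof. by move=> z0; rewrite [LHS]complexE (ger0_Im z0) mulr0 addr0. Qed.

Lemma normK_Re (z : K) : `|z| = (complex.Re `|z|)%:C.
Proof. exact/realC_Re. Qed.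

Context {X : normedModType K}.
Lemma rnormE (y : X) : `|y| = (rnorm y)%:C.
Proof. exact/realC_Re. Qed.

Lemma rnorm_ge0 (y : X) : 0 <= rnorm y.
Proof. by rewrite -ler0c -rnormE. Qed.

End S.


Section S2.
Context {R : realType}.
Local Notation K := R[i].
Context {X : normedModType K}.

Lemma lin0 (f : X -> K) : (forall (a : K) (u v : X), f (a *: u + v) = a * f u + f v) -> f 0 = 0.
Proof.
move=> lin; have := lin 1 0 0; rewrite scale1r addr0 mul1r => H.
by apply: (addrI (f 0)); rewrite addr0 -H.
Qed.

Lemma linZ (f : X -> K) : (forall (a : K) (u v : X), f (a *: u + v) = a * f u + f v) ->
  forall a u, f (a *: u) = a * f u.
Proof. by move=> lin a u; have := lin a u 0; rewrite addr0 lin0 // addr0. Qed.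

Lemma linD (f : X -> K) : (forall (a : K) (u v : X), f (a *: u + v) = a * f u + f v) ->
  forall u v, f (u + v) = f u + f v.
Proof. by move=> lin u v; have := lin 1 u v; rewrite scale1r mul1r. Qed.

Lemma dual_props (J : X -> X -> K) (x : X) : duality_section J -> rnorm x = 1 ->
  J x x = 1 /\ forall y, `|J x y| <= `|y|.
Proof.
move=> HJ Hx; have [[lin _] [fx [d1 d2]]] := HJ x.
rewrite Hx mulr1 expr1n in fx d1 d2.
have d_1 : dual_norm (J x) = 1 by rewrite d1 d2.
split; first by rewrite fx d_1.
set E := [set complex.Re `|J x y| | y in [set y : X | rnorm y <= 1]].
have hs : has_sup E.
  apply: contrapT => /sup_out Hs; move: d_1; rewrite /dual_norm -/E Hs => /eqP.
  by rewrite eq_sym oner_eq0.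
have ub1 : forall u, rnorm u <= 1 -> `|J x u| <= 1.
  move=> u Hu; rewrite normK_Re (_ : 1 = 1%:C) // lecR -d_1.
  by apply: sup_upper_bound => //; exists u.
move=> y; have [->|y0] := eqVneq y 0.
  by rewrite lin0 // !normr0.
have r0 : 0 < rnorm y by rewrite -ltcR -rnormE normr_gt0.
set u := (rnorm y)^-1%:C *: y.
have Hu : rnorm u = 1.
  apply: complexI; rewrite -rnormE normrZ ger0_norm; last by rewrite ler0c invr_ge0 ltW.
  by rewrite rnormE -rmorphM mulVf // gt_eqF.
have := ub1 u ltac:(by rewrite Hu); rewrite /u linZ // normrM ger0_norm; last by rewrite ler0c invr_ge0 ltW.
rewrite rnormE (_ : 1 = (rnorm y)^-1%:C * (rnorm y)%:C); last by rewrite -rmorphM mulVf // gt_eqF.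
by rewrite ler_pM2l // ltcR invr_gt0.
Qed.
End S2.


Section S3.
Context {R : realType}.
Local Notation K := R[i].
Local Notation Ko := (R[i])^o.

Lemma normC_real (r : R) : `|r%:C| = `|r|%:C :> K.
Proof. by rewrite normc_def /= expr0n addr0 sqrtr_sqr. Qed.

Lemma abs_le_sqrt (x y : R) : `|x| <= Num.sqrt (x ^+ 2 + y ^+ 2).
Proof.
rewrite -(sqrtr_sqr x) ler_sqrt ?lerDl ?sqr_ge0 //.
by rewrite addr_ge0 ?sqr_ge0.
Qed.

Lemma cvgC {T} {F : set_system T} {FF : Filter F} (g : T -> R) (l : R) :
  g @ F --> l -> (fun t => (g t)%:C : Ko) @ F --> (l%:C : Ko).
Proof.
move=> /cvgrPdist_lt Hg; apply/cvgrPdist_lt => e e0.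
have E := realC_Re e (ltW e0); rewrite E ltcR in e0; rewrite E.
by apply: filterS (Hg _ e0) => t Ht; rewrite -rmorphB normC_real ltcR.
Qed.

Lemma cvgRe {T} {F : set_system T} {FF : Filter F} (g : T -> Ko) (l : Ko) :
  g @ F --> l -> (fun t => complex.Re (g t)) @ F --> complex.Re l.
Proof.
move=> /cvgrPdist_lt Hg; apply/cvgrPdist_lt => e e0.
have e0' : 0 < e%:C :> K by rewrite ltcR.
apply: filterS (Hg _ e0') => t; rewrite -ltcR; apply: le_lt_trans.
by rewrite -raddfB /= normc_def /= lecR; apply: abs_le_sqrt.
Qed.

Lemma cvgIm {T} {F : set_system T} {FF : Filter F} (g : T -> Ko) (l : Ko) :
  g @ F --> l -> (fun t => complex.Im (g t)) @ F --> complex.Im l.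
Proof.
move=> /cvgrPdist_lt Hg; apply/cvgrPdist_lt => e e0.
have e0' : 0 < e%:C :> K by rewrite ltcR.
apply: filterS (Hg _ e0') => t; rewrite -ltcR; apply: le_lt_trans.
by rewrite -raddfB /= normc_def /= lecR [X in _ <= Num.sqrt X]addrC; apply: abs_le_sqrt.
Qed.

Lemma unitRI (a : K) : `|a| = 1 -> complex.Re a ^+ 2 + complex.Im a ^+ 2 = 1.
Proof.
rewrite normc_def => -[] /(congr1 (fun t => t ^+ 2)).
by rewrite sqr_sqrtr ?addr_ge0 ?sqr_ge0 // expr1n.
Qed.

Definition circ (s r : R) : K := r%:C + 'i * (s * Num.sqrt (1 - r ^+ 2))%:C.

Lemma circ_cont s : continuous (circ s : R -> Ko).
Proof.
move=> r; apply: cvgD; first by apply: cvgC; exact: cvg_id.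
apply: cvgM; first exact: cvg_cst.
apply: cvgC; apply: cvgM; first exact: cvg_cst.
apply: (@continuous_comp _ _ _ (fun t : R => 1 - t ^+ 2) (@Num.sqrt R) r); last exact: sqrt_continuous.
apply: cvgB; first exact: cvg_cst.
exact: exprn_continuous.
Qed.

Lemma circ_norm s r : s ^+ 2 = 1 -> -1 <= r <= 1 -> `|circ s r| = 1.
Proof.
move=> s2 /andP[r1 r2]; have h : 0 <= 1 - r ^+ 2 by nra.
rewrite normc_def /= !mul0r !mul1r !subr0 !add0r addr0 exprMn s2 mul1r sqr_sqrtr //.
by rewrite subrKC sqrtr1.
Qed.

Lemma circ_repr (a : K) : `|a| = 1 ->
  -1 <= complex.Re a <= 1 /\
  a = circ (if 0 <= complex.Im a then 1 else -1) (complex.Re a).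
Proof.
move=> /unitRI h; split; first by apply/andP; split; nra.
rewrite /circ [LHS]complexE; congr (_ + _ * _%:C).
have -> : 1 - complex.Re a ^+ 2 = complex.Im a ^+ 2 by lra.
rewrite sqrtr_sqr; case: ifP => H; first by rewrite mul1r ger0_norm.
by rewrite ltr0_norm ?mulN1r ?opprK // ltNge H.
Qed.

Lemma circle_max (h : Ko -> R) : continuous h ->
  exists a0 : K, `|a0| = 1 /\ forall a, `|a| = 1 -> h a <= h a0.
Proof.
move=> hc.
have ev s : exists2 c, c \in `[-1, 1] & forall t, t \in `[-1, 1] -> h (circ s t) <= h (circ s c).
  apply: EVT_max; first by lra.
  apply: continuous_subspaceT => r; exact: (continuous_comp (circ_cont s r) (hc _)).
have [c1 c1i H1] := ev 1; have [c2 c2i H2] := ev (-1).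
have n1 : `|circ 1 c1| = 1 by apply: circ_norm; rewrite ?expr1n // -in_itv.
have n2 : `|circ (-1) c2| = 1 by apply: circ_norm; rewrite ?sqrrN ?expr1n // -in_itv.
have hall a : `|a| = 1 -> h a <= Num.max (h (circ 1 c1)) (h (circ (-1) c2)).
  move=> /circ_repr [ai ->]; case: ifP => _; rewrite le_max.
    by rewrite H1 // in_itv.
  by rewrite H2 ?orbT // in_itv.
case: (leP (h (circ 1 c1)) (h (circ (-1) c2))) => Hc.
  exists (circ (-1) c2); split => // a /hall; by rewrite max_r.
exists (circ 1 c1); split => // a /hall; by rewrite max_l // ltW.
Qed.

End S3.


Lemma fieldid {R : realType} (p q n m : R[i]) : q != 0 -> n != 0 ->
  p + (p * m) / (q * n) * q = n^-1 * (n + m) * p.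
Proof. by move=> hq hn; field; rewrite hq hn. Qed.

Section S4.
Context {R : realType}.
Local Notation K := R[i].
Local Notation Ko := (R[i])^o.
Context {X : normedModType K}.

Lemma linT0 (g : X -> X) : (forall (a : K) (u v : X), g (a *: u + v) = a *: g u + g v) -> g 0 = 0.
Proof.
move=> lin; have := lin 1 0 0; rewrite !scale1r addr0 => H.
by apply: (addrI (g 0)); rewrite addr0 -H.
Qed.

Lemma linTZ (g : X -> X) : (forall (a : K) (u v : X), g (a *: u + v) = a *: g u + g v) ->
  forall a u, g (a *: u) = a *: g u.
Proof. by move=> lin a u; have := lin a u 0; rewrite addr0 linT0 // addr0. Qed.

Lemma linTD (g : X -> X) : (forall (a : K) (u v : X), g (a *: u + v) = a *: g u + g v) ->
  forall u v, g (u + v) = g u + g v.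
Proof. by move=> lin u v; have := lin 1 u v; rewrite !scale1r. Qed.

Lemma cvg_rnorm {T} {F : set_system T} {FF : Filter F} (g : T -> X) (l : X) :
  g @ F --> l -> (fun t => rnorm (g t)) @ F --> rnorm l.
Proof.
move=> /cvgrPdist_lt Hg; apply/cvgrPdist_lt => e e0.
have e0' : 0 < e%:C :> K by rewrite ltcR.
apply: filterS (Hg _ e0') => t Ht.
rewrite -ltcR -normC_real (_ : (rnorm l - rnorm (g t))%:C = `|l| - `|g t|); last by rewrite !rnormE rmorphB.
exact: le_lt_trans (ler_dist_dist _ _) Ht.
Qed.


Lemma eigen_step (f : X -> K) (T : R -> X -> X) (x : X) :
  (forall (a : K) (u v : X), f (a *: u + v) = a * f u + f v) ->
  (forall y, `|f y| <= `|y|) -> f x = 1 -> rnorm x = 1 ->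
  (forall y : X, rnorm y = 1 -> y <> x -> rnorm (x + y) < 2) ->
  (forall t, 0 <= t -> forall (a : K) (u v : X), T t (a *: u + v) = a *: T t u + T t v) ->
  (forall s t, 0 <= s -> 0 <= t -> forall u, T (s + t) u = T s (T t u)) ->
  (forall t, 0 <= t -> forall u, rnorm (T t u) <= rnorm u) ->
  (fun t : R => complex.Re `|f (T t x)|) @ +oo --> (1 : R) ->
  forall s, 0 <= s -> T s x = f (T s x) *: x /\ `|f (T s x)| = 1.
Proof.
move=> flin fb fx Hx rot HTl HTs HTc Hphi s s0.
set phi := fun t : R => complex.Re `|f (T t x)|.
set w := T s x.
have Tc t u : 0 <= t -> `|T t u| <= `|u|.
  move=> t0; rewrite !rnormE lecR; exact: HTc.
have Tw t : 0 <= t -> T (t + s) x = T t w by move=> t0; rewrite HTs.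
have phile t : 0 <= t -> phi (t + s) <= rnorm w.
  move=> t0; rewrite /phi -lecR -normK_Re -rnormE Tw //.
  exact: le_trans (fb _) (Tc _ _ t0).
have w1 : rnorm w = 1.
  apply/eqP; rewrite eq_le; apply/andP; split; first by rewrite -Hx; exact: HTc.
  rewrite leNgt; apply/negP => wlt.
  have [N [_ HN]] := @cvgr_gt R _ _ _ _ _ Hphi _ wlt.
  pose u := Num.max N s + 1.
  have uN : N < u by rewrite /u ltr_pwDr // le_max lexx.
  have us : s <= u by rewrite /u ler_wpDr // le_max lexx orbT.
  have := HN u uN; have := phile (u - s); rewrite subr_ge0 subrK => /(_ us).
  rewrite -/(phi u); lra.
have cont_h : continuous (fun a : Ko => rnorm (x + a *: w)).
  move=> a.
  have H1 : (fun b : Ko => b *: w) @ a --> a *: w.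
    exact: (@cvgZr_tmp _ X Ko (nbhs (a : Ko)) _ (fun b => b) a w cvg_id).
  have H2 : (fun b : Ko => x + b *: w) @ a --> x + a *: w.
    exact: (@cvgD _ X Ko (nbhs (a : Ko)) _ (fun=> x) (fun b : Ko => b *: w) x (a *: w) (cvg_cst _) H1).
  exact: (@cvg_rnorm _ _ _ _ _ H2).
have [a0 [a01 Ha0]] := circle_max _ cont_h.
have Hw : `|w| = 1 by rewrite rnormE w1.
case: (eqVneq (a0 *: w) x) => Ha0w.
  have a0n : a0 != 0 by rewrite -normr_gt0 a01.
  have wE : w = a0^-1 *: x by rewrite -Ha0w scalerA mulVf // scale1r.
  have fw : f w = a0^-1 by rewrite wE linZ // fx mulr1.
  split; first by rewrite -/w fw.
  by rewrite -/w fw normfV a01 invr1.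
exfalso.
set M := rnorm (x + a0 *: w).
have M2 : M < 2.
  apply: rot; last by apply/eqP.
  by apply: complexI; rewrite -rnormE normrZ a01 Hw mul1r.
have M0 : 0 <= M := rnorm_ge0 _.
have [N [_ HN]] := @cvgr_gt R _ _ _ _ _ Hphi (M / 2) ltac:(lra).
pose t := Num.max N 0 + 1.
have tN : N < t by rewrite /t ltr_pwDr // le_max lexx.
have t0 : 0 <= t by rewrite /t addr_ge0 // le_max lexx orbT.
have p1 := HN t tN.
have q1 := HN (t + s) ltac:(by rewrite ltr_wpDr).
set p := f (T t x); set q := f (T t w).
have pE : `|p| = (phi t)%:C := normK_Re _.
have qE : `|q| = (phi (t + s))%:C by rewrite /phi Tw // -normK_Re.
have pn : `|p| != 0 by rewrite pE; apply/eqP => /complexI; lra.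
have qn : q != 0 by rewrite -normr_eq0 qE; apply/eqP => /complexI; lra.
have pn' : p != 0 by rewrite -normr_eq0.
set a := (p * `|q|) / (q * `|p|).
have a1 : `|a| = 1.
  rewrite /a normf_div !normrM !normr_id [X in _ / X]mulrC divff //.
  by rewrite mulf_neq0 // normr_eq0.
have key : p + a * q = `|p|^-1 * (`|p| + `|q|) * p.
  by rewrite /a; apply: fieldid.
have normkey : `|p + a * q| = `|p| + `|q|.
  rewrite key !normrM normfV normr_id (ger0_norm (addr_ge0 (normr_ge0 _) (normr_ge0 _))).
  by rewrite mulrC mulrA mulfV // mul1r.
have bound : `|p + a * q| <= M%:C.
  have -> : p + a * q = f (T t (x + a *: w)).
    by rewrite (addrC x) (HTl t t0) flin addrC.
  apply: le_trans (fb _) _; apply: le_trans (Tc _ _ t0) _.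
  by rewrite rnormE lecR; exact: Ha0.
move: bound; rewrite normkey pE qE -rmorphD lecR.
lra.
Qed.
End S4.


Section S5.
Context {R : realType}.

Lemma le_all_pos (d : R) : 0 <= d -> (forall e, 0 < e -> d < e + e) -> d = 0.
Proof.
move=> d0 H; apply/eqP; rewrite eq_le d0 andbT; rewrite leNgt; apply/negP => dp.
have := H (d / 2) ltac:(lra); lra.
Qed.

Lemma cauchy_lin (psi : R -> R) (delta : R) : 0 < delta ->
  (forall s t, 0 <= s -> 0 <= t -> s + t <= delta -> psi (s + t) = psi s + psi t) ->
  (forall e, 0 < e -> exists2 eta, 0 < eta & forall r, 0 < r < eta -> `|psi r| < e) ->
  forall h, 0 <= h <= delta -> psi h = h / delta * psi delta.
Proof.
move=> d0 add cont h /andP[h0 hd].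
have psi0 : psi 0 = 0.
  have := add 0 0 (lexx 0) (lexx 0); rewrite addr0 => /(_ (ltW d0)) H.
  by apply: (addrI (psi 0)); rewrite addr0 -H.
apply/eqP; rewrite -subr_eq0; apply/eqP; apply/normr0_eq0.
apply: le_all_pos => // e e0.
have [eta eta0 Heta] := cont e e0.
set n := (Num.truncn (delta / eta + `|psi delta| / e)).+1.
set N : R := n%:R.
have NG : delta / eta + `|psi delta| / e < N by rewrite /N /n Num.Theory.truncnS_gt.
have Ne1 : 0 <= delta / eta by rewrite divr_ge0 // ltW.
have Ne2 : 0 <= `|psi delta| / e by rewrite divr_ge0 // ltW.
have N0 : 0 < N by lra.
set a := delta / N.
have a0 : 0 < a by rewrite divr_gt0.
have Na : N * a = delta by rewrite /a mulrC divfK // gt_eqF.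
have mult k : (k <= n)%N -> psi (k%:R * a) = k%:R * psi a.
  elim: k => [|k IH] kn; first by rewrite !mul0r psi0.
  have kn' : (k <= n)%N by apply: ltnW.
  have kN : k.+1%:R <= N by rewrite /N ler_nat.
  rewrite -natr1 !mulrDl !mul1r add ?IH //; first by rewrite mulr_ge0 // ltW.
    by rewrite ltW.
  have : (k%:R + 1) * a <= N * a by rewrite ler_pM2r // natr1.
  by rewrite Na mulrDl mul1r.
have psid : psi delta = N * psi a by rewrite -Na mult.
set x := N * h / delta.
have x0 : 0 <= x by rewrite /x divr_ge0 // ?mulr_ge0 // ltW.
set k := Num.truncn x.
have /andP[kx xk] := Num.Theory.truncn_itv x0.
rewrite -/k in kx xk.
have xN : x <= N by rewrite /x ler_pdivrMr // ler_pM2l.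
have kn : (k <= n)%N by rewrite -(ler_nat R); apply: le_trans kx xN.
set r := h - k%:R * a.
have ha : h = x * a by rewrite /x /a; field; rewrite !gt_eqF.
have r0 : 0 <= r by rewrite /r ha subr_ge0 ler_pM2r.
have ra : r < a.
  rewrite /r ha -mulrBl -ltr_pdivlMr // divff ?gt_eqF //. by rewrite -natr1 in xk; lra.
have hE : h = k%:R * a + r by rewrite /r addrC subrK.
have psih : psi h = k%:R * psi a + psi r.
  rewrite {1}hE add; [by rewrite mult | by rewrite mulr_ge0 // ltW | done | by rewrite -hE].
have aeta : a < eta.
  have H : delta / eta < N by lra.
  rewrite /a ltr_pdivrMr // mulrC -ltr_pdivrMr //.
have pr : `|psi r| < e.
  have [->|rn] := eqVneq r 0; first by rewrite psi0 normr0.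
  apply: Heta; rewrite lt_neqAle eq_sym rn r0 /=; exact: lt_trans ra aeta.
have pa : `|psi a| < e.
  have : `|psi delta| < N * e by rewrite -ltr_pdivrMr // mulrC; lra.
  by rewrite psid normrM ger0_norm ?ltW // ltr_pM2l.
have -> : psi h - h / delta * psi delta = psi r - (x - k%:R) * psi a.
  rewrite psih psid /x; field; rewrite gt_eqF //.
move: pr pa; rewrite !ltr_norml => /andP[pr1 pr2] /andP[pa1 pa2].
have xk1 : x - k%:R < 1 by rewrite -natr1 in xk; lra.
have xk0 : 0 <= x - k%:R by lra.
move: xk1 xk0; set y := x - k%:R => xk1 xk0.
apply/andP; split; nra.
Qed.
End S5.


Section S6.
Context {R : realType}.

Lemma trig_lim (g : R -> R) (dg lam : R) : is_derive (0:R) 1 g dg ->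
  (fun h => (g (lam * h) - g 0) / h) @ 0^'+ --> lam * dg.
Proof.
move=> Hd.
have dif : differentiable g 0 by apply/derivable1_diffP; exact: ex_derive.
have D : 'D_lam g 0 = lam * dg.
  rewrite deriveE //.
  have -> : 'd g 0 lam = lam *: 'd g 0 1 by rewrite -linearZ /= [lam *: 1]mulr1.
  by rewrite -deriveE // derive_val.
have H : derivable g 0 lam := @diff_derivable _ _ _ g 0 lam dif.
apply: cvg_dnbhs_at_right; rewrite -D.
have -> : (fun h => (g (lam * h) - g 0) / h) =
          (fun h => h^-1 *: ((g \o shift 0) (h *: lam) - g 0)).
  by apply: funext => h /=; rewrite addr0 mulrC [h *: lam]mulrC.
exact: H.
Qed.

Lemma near_right0 (P : R -> Prop) : (\forall h \near 0^'+, P h) ->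
  exists2 e, 0 < e & forall h, 0 < h -> h < e -> P h.
Proof.
move=> [e e0 He]; exists e => // h h0 he; apply: He => //.
by rewrite /ball /= sub0r normrN gtr0_norm.
Qed.

End S6.


Section S7.
Context {R : realType}.
Local Notation K := R[i].
Local Notation Ko := (R[i])^o.

Lemma asin0 : asin 0 = 0 :> R.
Proof.
have hp := @pi_gt0 R.
by rewrite -{1}sin0 sinK // in_itv /=; apply/andP; split; lra.
Qed.

Lemma char_deriv (c : R -> K) :
  c 0 = 1 ->
  (forall s, 0 <= s -> `|c s| = 1) ->
  (forall s t, 0 <= s -> 0 <= t -> c (s + t) = c s * c t) ->
  (c : R -> Ko) @ 0^'+ --> (1 : Ko) ->
  exists lam : R, (fun h : R => ((h^-1)%:C * (c h - 1) : Ko)) @ 0^'+ --> ('i * lam%:C : Ko).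
Proof.
move=> c0 cN1 cM ccv.
have hp := @pi_gt0 R.
pose im s := complex.Im (c s); pose re s := complex.Re (c s).
pose phi s := asin (im s).
have Him : im @ 0^'+ --> (0:R) := @cvgIm R R _ (at_right_proper_filter 0) c 1 ccv.
have Hre : re @ 0^'+ --> (1:R) := @cvgRe R R _ (at_right_proper_filter 0) c 1 ccv.
have Hphi : phi @ 0^'+ --> (0 : R).
  have ca : {for (0:R), continuous (@asin R)}.
    by apply: continuous_asin; apply/andP; split; lra.
  have := continuous_cvg _ ca Him.
  by rewrite asin0; apply.
have RI s : 0 <= s -> re s ^+ 2 + im s ^+ 2 = 1 by move=> s0; apply: unitRI; apply: cN1.
have [e1 e10 H1] := @near_right0 R _ (@cvgr_lt R _ _ _ _ _ Hphi (pi / 4) ltac:(lra)).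
have [e2 e20 H2] := @near_right0 R _ (@cvgr_gt R _ _ _ _ _ Hphi (- (pi / 4)) ltac:(lra)).
have [e3 e30 H3] := @near_right0 R _ (@cvgr_gt R _ _ _ _ _ Hre 0 ltac:(lra)).
pose delta := Num.min e1 (Num.min e2 e3) / 2.
have d0 : 0 < delta by rewrite /delta divr_gt0 // !lt_min e10 e20 e30.
have dle : delta < e1 /\ delta < e2 /\ delta < e3.
  have : Num.min e1 (Num.min e2 e3) <= e1 /\ Num.min e1 (Num.min e2 e3) <= e2 /\
         Num.min e1 (Num.min e2 e3) <= e3.
    by rewrite !ge_min !lexx /= !orbT.
  have : 0 < Num.min e1 (Num.min e2 e3) by rewrite !lt_min e10 e20 e30.
  rewrite /delta; lra.
have good h : 0 <= h <= delta -> - (pi / 4) <= phi h <= pi / 4 /\ 0 < re h.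
  case/andP => h0 hd; have [->|hn] := eqVneq h 0.
    rewrite /phi /im /re c0 /= asin0; split; [apply/andP; split|]; lra.
  have hpos : 0 < h by rewrite lt_neqAle eq_sym hn.
  have := H1 h hpos; have := H2 h hpos; have := H3 h hpos.
  case: dle => a1 [a2 a3] /(_ ltac:(lra)) r1 /(_ ltac:(lra)) r2 /(_ ltac:(lra)) r3.
  split; [apply/andP; split|]; lra.
have imb h : 0 <= h -> -1 <= im h <= 1.
  by move=> h0; have := RI h h0; move=> E; apply/andP; split; nra.
have rep h : 0 <= h <= delta -> c h = (cos (phi h))%:C + 'i * (sin (phi h))%:C.
  move=> hh; have [_ rp] := good h hh; have h0 : 0 <= h by case/andP: hh.
  rewrite [LHS]complexE; congr (_%:C + _ * _%:C).
    rewrite /phi cos_asin ?imb //.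
    have -> : 1 - im h ^+ 2 = re h ^+ 2 by have := RI h h0; lra.
    by rewrite sqrtr_sqr ger0_norm // ltW.
  by rewrite /phi asinK // in_itv /= imb.
have add s t : 0 <= s -> 0 <= t -> s + t <= delta -> phi (s + t) = phi s + phi t.
  move=> s0 t0 std.
  have ss : 0 <= s <= delta by rewrite s0 /=; lra.
  have tt : 0 <= t <= delta by rewrite t0 /=; lra.
  have [/andP[p1 p2] _] := good s ss; have [/andP[q1 q2] _] := good t tt.
  have E : im (s + t) = sin (phi s + phi t).
    rewrite /im cM // (rep s ss) (rep t tt) sinD /=; ring.
  rewrite /phi E sinK // in_itv /=; apply/andP; split; lra.
have cont e : 0 < e -> exists2 eta, 0 < eta & forall r, 0 < r < eta -> `|phi r| < e.
  move=> e0.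
  have N : \forall r \near 0^'+, `|0 - phi r| < e.
    by move/cvgrPdist_lt: Hphi; apply.
  have [eta eta0 He] := near_right0 _ N; exists eta => // r /andP[r0 re0].
  by have := He r r0 re0; rewrite sub0r normrN.
have lin := @cauchy_lin R phi delta d0 add cont.
set lam := phi delta / delta.
exists lam.
have philam h : 0 <= h <= delta -> phi h = lam * h.
  by move=> hh; rewrite lin // /lam; field; rewrite gt_eqF.
set G := fun h : R => (((cos (lam * h) - cos 0) / h)%:C + 'i * ((sin (lam * h) - sin 0) / h)%:C : Ko).
have EQ : {near 0^'+, G =1 (fun h : R => ((h^-1)%:C * (c h - 1) : Ko))}.
  exists delta => // h /= hb h0.
  have hh : 0 <= h <= delta.
    by move: hb; rewrite sub0r normrN gtr0_norm // => hb; rewrite ltW //= ltW.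
  rewrite /G (rep h hh) (philam h hh) sin0 cos0.
  apply/eqP; rewrite eq_complex /=; apply/andP; split; apply/eqP; ring.
have Hcos := trig_lim _ _ lam (is_derive_cos 0).
have Hsin := trig_lim _ _ lam (is_derive_sin 0).
rewrite sin0 oppr0 mulr0 in Hcos; rewrite cos0 mulr1 in Hsin.
have GL : G @ 0^'+ --> ('i * lam%:C : Ko).
  have -> : ('i * lam%:C : Ko) = (0:R)%:C + 'i * lam%:C by rewrite add0r.
  apply: cvgD; first exact: (@cvgC R R _ (at_right_proper_filter 0) _ _ Hcos).
  apply: cvgM; first exact: cvg_cst.
  exact: (@cvgC R R _ (at_right_proper_filter 0) _ _ Hsin).
exact: cvg_trans (near_eq_cvg EQ) GL.
Qed.
End S7.

Theorem mainTheorem3 (R : realType) (X : completeNormedModType R[i])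
  (J : X -> X -> R[i]) (x : X) (T : R -> X -> X) (D : set X) (A : X -> X) :
  duality_section J ->
  rnorm x = 1 ->
  (forall y : X, rnorm y = 1 -> y <> x -> rnorm (x + y) < 2) ->
  C0_contraction_semigroup T ->
  is_generator T D A ->
  (fun t : R => complex.Re `|J x (T t x)|) @ +oo --> (1 : R) ->
  D x /\ exists lambda : R, A x = ('i * lambda%:C) *: x.
Proof.
move=> HJ Hx rot [HTl [HTcont [HT0 [HTs [HTc HTr]]]]] [HD HA] Hphi.
have [fx fb] := dual_props _ _ HJ Hx.
have [flin fcont] := (HJ x).1.
have step := @eigen_step _ _ (J x) T x flin fb fx Hx rot HTl HTs HTc Hphi.
pose c s := J x (T s x).
have c0 : c 0 = 1 by rewrite /c HT0.
have cN1 s : 0 <= s -> `|c s| = 1 by move=> s0; exact: (step s s0).2.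
have cM s t : 0 <= s -> 0 <= t -> c (s + t) = c s * c t.
  move=> s0 t0; rewrite {1}/c HTs // (step t t0).1 (linTZ _ (HTl s s0)) (linZ _ flin).
  by rewrite -/(c s) mulrC.
have ccv : (c : R -> (R[i])^o) @ 0^'+ --> (1 : (R[i])^o).
  have := @continuous_cvg _ _ _ _ (at_right_proper_filter 0) _ _ _ (fcont x) (HTr x).
  by rewrite fx; apply.
have [lam Hlam] := char_deriv _ c0 cN1 cM ccv.
have EQ : {near 0^'+, (fun h : R => ((h^-1)%:C * (c h - 1)) *: x) =1 diff_quot T x}.
  exists 1; first exact: ltr01.
  move=> h /= _ h0.
  rewrite /diff_quot (step h (ltW h0)).1 -/(c h) -scalerA scalerBl scale1r.
  by [].
have Hdq : diff_quot T x @ 0^'+ --> ('i * lam%:C) *: x.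
  apply: cvg_trans (near_eq_cvg EQ) _.
  exact: (@cvgZr_tmp _ X R _ (at_right_proper_filter 0) _ _ x Hlam).
have Dx : D x by rewrite HD; exact: cvgP Hdq.
split => //; exists lam.
exact: (cvg_unique _ (HA x Dx) Hdq).
Qed.
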